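(* Let $p,q,n,d$ be positive integers with $p\le n$ and $q\ge n+d-p$. Let $A\in\mathbb{R}^{q\times n}$, $B\in\mathbb{R}^{q\times d}$, $C\in\mathbb{R}^{p\times n}$ of full row rank and $D\in\mathbb{R}^{p\times d}$. Set $\widetilde A=[A\ \ B]$, $\widetilde C=[C\ \ D]$. Let $\widetilde Q=[\widetilde Q_1\ \ \widetilde Q_2]$ be an orthogonal matrix of order $n+d$ with $\widetilde Q_1\in\mathbb{R}^{(n+d)\times p}$ and $\mathcal{R}(\widetilde Q_1)=\mathcal{R}(\widetilde C^T)$ (e.g. obtained from a QR factorization $\widetilde C^T=\widetilde Q\begin{bmatrix}\widetilde R_1\\ 0\end{bmatrix}$), so that the columns of $\widetilde Q_2\in\mathbb{R}^{(n+d)\times(n+d-p)}$ are an orthonormal basis of the null space of $\widetilde C$. Let $\widetilde A\widetilde Q_2=\widetilde U\widetilde\Sigma\widetilde V^T$ be a thin SVD, with $\widetilde U\in\mathbb{R}^{q\times(n+d-p)}$ having orthonormal columns, $\widetilde V$ orthogonal of order $n+d-p$, and $\widetilde\Sigma=\mathrm{diag}(\widetilde\sigma_1,\dots,\widetilde\sigma_{n+d-p})$, $\widetilde\sigma_1\ge\cdots\ge\widetilde\sigma_{n+d-p}\ge 0$. Let $k=n-p$, and write $\widetilde U=[\widetilde U_1\ \ \widetilde U_2]$, $\widetilde V=[\widetilde V_1\ \ \widetilde V_2]$ where $\widetilde U_1,\widetilde V_1$ consist of the first $k$ columns, and $\widetilde\Sigma_1=\mathrm{diag}(\widetilde\sigma_1,\dots,\widetilde\sigma_k)$.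 Put $\overline V_1=\widetilde Q_2\widetilde V_1=\begin{bmatrix}\overline V_{11}\\ \overline V_{21}\end{bmatrix}$ and $\overline V_2=\widetilde Q_2\widetilde V_2=\begin{bmatrix}\overline V_{12}\\ \overline V_{22}\end{bmatrix}$ with $\overline V_{11}\in\mathbb{R}^{n\times k}$, $\overline V_{21}\in\mathbb{R}^{d\times k}$, $\overline V_{12}\in\mathbb{R}^{n\times d}$, $\overline V_{22}\in\mathbb{R}^{d\times d}$. Assume $\widetilde\sigma_{n-p}>\widetilde\sigma_{n-p+1}$ (void if $n=p$) and that $\overline V_{22}$ is nonsingular. Then the TLSE problem has a unique TLSE solution, namely $X_n=-\overline V_{12}\overline V_{22}^{-1}$, and $X_n$ is also the solution of the consistent linear system $\widehat AX=\widehat B$, $CX=D$, where $\widehat A=\widetilde U_1\widetilde\Sigma_1\overline V_{11}^T$ and $\widehat B=\widetilde U_1\widetilde\Sigma_1\overline V_{21}^T$.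
   Context: The multidimensional total least squares problem with linear equality constraint (TLSE) is: minimize $\|[E\ \ F]\|_F$ over $E\in\mathbb{R}^{q\times n}$, $F\in\mathbb{R}^{q\times d}$ subject to the existence of $X\in\mathbb{R}^{n\times d}$ with $(A+E)X=B+F$ and $CX=D$. A TLSE solution is a matrix $X\in\mathbb{R}^{n\times d}$ with $CX=D$ and $(A+E)X=B+F$ for some minimizing pair $(E,F)$. $\mathcal R(\cdot)$ denotes column space. *)

(* Defs.v *)
From HB Require Import structures.
From mathcomp Require Import all_boot all_order all_algebra.
From mathcomp Require Import reals.
Set Implicit Arguments. Unset Strict Implicit. Unset Printing Implicit Defensive.
Import Order.TTheory GRing.Theory Num.Theory.
Local Open Scope ring_scope.

Definition frob_norm (R : rcfType) (m n : nat) (M : 'M[R]_(m, n)) : R :=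
  Num.sqrt (\sum_(i < m) \sum_(j < n) M i j ^+ 2).

Definition tlse_feasible (R : rcfType) (q n d p : nat)
  (A : 'M[R]_(q, n)) (B : 'M[R]_(q, d)) (C : 'M[R]_(p, n)) (D : 'M[R]_(p, d))
  (E : 'M[R]_(q, n)) (F : 'M[R]_(q, d)) : Prop :=
  exists X : 'M[R]_(n, d), (A + E) *m X = B + F /\ C *m X = D.

Definition tlse_minimizer (R : rcfType) (q n d p : nat)
  (A : 'M[R]_(q, n)) (B : 'M[R]_(q, d)) (C : 'M[R]_(p, n)) (D : 'M[R]_(p, d))
  (E : 'M[R]_(q, n)) (F : 'M[R]_(q, d)) : Prop :=
  tlse_feasible A B C D E F /\
  forall (E' : 'M[R]_(q, n)) (F' : 'M[R]_(q, d)),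
    tlse_feasible A B C D E' F' ->
    frob_norm (row_mx E F) <= frob_norm (row_mx E' F').

Definition tlse_solution (R : rcfType) (q n d p : nat)
  (A : 'M[R]_(q, n)) (B : 'M[R]_(q, d)) (C : 'M[R]_(p, n)) (D : 'M[R]_(p, d))
  (X : 'M[R]_(n, d)) : Prop :=
  C *m X = D /\
  exists (E : 'M[R]_(q, n)) (F : 'M[R]_(q, d)),
    tlse_minimizer A B C D E F /\ (A + E) *m X = B + F.

(* Main.v *)
Require Import Defs.
From HB Require Import structures.
From mathcomp Require Import all_boot all_order all_algebra.
From mathcomp Require Import reals.
From mathcomp Require Import ring lra.
Set Implicit Arguments. Unset Strict Implicit.
Import Order.TTheory GRing.Theory Num.Theory.
Local Open Scope ring_scope.

Lemma tr_sq (R : comPzRingType) m n (M : 'M[R]_(m, n)) :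
  \tr (M *m M^T) = \sum_i \sum_j M i j ^+ 2.
Proof.
rewrite /mxtrace; apply: eq_bigr => i _; rewrite !mxE.
by apply: eq_bigr => j _; rewrite !mxE expr2.
Qed.

Lemma tr_ge0 (R : realDomainType) m n (M : 'M[R]_(m, n)) :
  0 <= \tr (M *m M^T).
Proof.
by rewrite tr_sq; apply: sumr_ge0 => i _; apply: sumr_ge0 => j _; apply: sqr_ge0.
Qed.

Lemma tr_eq0 (R : realDomainType) m n (M : 'M[R]_(m, n)) :
  \tr (M *m M^T) = 0 -> M = 0.
Proof.
rewrite tr_sq => h; apply/matrixP => i j; rewrite mxE.
have h1 := psumr_eq0P (fun i _ => sumr_ge0 _ (fun j _ => sqr_ge0 (M i j))) h.
have h2 := psumr_eq0P (fun j _ => sqr_ge0 (M i j)) (h1 i isT).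
by apply/eqP; rewrite -sqrf_eq0 h2.
Qed.

Lemma frobE (R : rcfType) m n (M : 'M[R]_(m, n)) :
  frob_norm M = Num.sqrt (\tr (M *m M^T)).
Proof. by rewrite /frob_norm tr_sq. Qed.

Lemma TF (R : comPzRingType) q N m (M : 'M[R]_(q, N)) (Q2 : 'M[R]_(N, m))
  (U : 'M[R]_(q, m)) (s : 'rV[R]_m) (V : 'M[R]_m) (Nm : 'M[R]_N) :
  M *m Q2 = U *m diag_mx s *m V^T -> U^T *m U = 1%:M ->
  Q2 *m Q2^T *m Nm = Nm ->
  \tr ((M *m Nm) *m (M *m Nm)^T) =
  \sum_i s 0 i ^+ 2 * ((Nm^T *m Q2 *m V)^T *m (Nm^T *m Q2 *m V)) i i.
Proof.
move=> hM hU hN.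
set Y := Nm^T *m Q2 *m V.
have -> : M *m Nm = U *m diag_mx s *m Y^T.
  by rewrite -{1}hN !mulmxA hM /Y !trmx_mul !trmxK !mulmxA.
rewrite -[_ ^T *m Y]/(Y^T *m Y); clearbody Y.
rewrite !trmx_mul trmxK tr_diag_mx.
rewrite -!mulmxA mxtrace_mulC -!mulmxA hU mulmx1 !mulmxA -(mulmxA (diag_mx s)).
rewrite /mxtrace; apply: eq_bigr => i _.
rewrite mul_mx_diag mxE mul_diag_mx !mxE; ring.
Qed.

Lemma INEQ (R : realFieldType) k d (s : 'rV[R]_(k + d)) (h : 'I_(k + d) -> R) :
  (0 < d)%N ->
  (forall i j : 'I_(k + d), (i <= j)%N -> s 0 j <= s 0 i) ->
  (forall i, 0 <= s 0 i) ->
  (forall i, 0 <= h i) -> (forall i, h i <= 1) -> \sum_i h i = d%:R ->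
  \sum_(j < d) s 0 (rshift k j) ^+ 2 <= \sum_i s 0 i ^+ 2 * h i /\
  ((forall i j : 'I_(k + d), (0 < k)%N -> nat_of_ord i = k.-1 ->
      nat_of_ord j = k -> s 0 j < s 0 i) ->
   \sum_i s 0 i ^+ 2 * h i = \sum_(j < d) s 0 (rshift k j) ^+ 2 ->
   forall i : 'I_k, h (lshift d i) = 0).
Proof.
move=> d0 sdec spos h0 h1 hsum.
pose j0 : 'I_(k + d) := rshift k (Ordinal d0).
pose t := s 0 j0 ^+ 2.
set S2 := \sum_(j < d) _.
have Hid : \sum_i s 0 i ^+ 2 * h i - S2 =
   \sum_(i < k) (s 0 (lshift d i) ^+ 2 - t) * h (lshift d i) +
   \sum_(j < d) (t - s 0 (rshift k j) ^+ 2) * (1 - h (rshift k j)).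
  have e1 : \sum_(i < k) (s 0 (lshift d i) ^+ 2 - t) * h (lshift d i) =
     \sum_(i < k) s 0 (lshift d i) ^+ 2 * h (lshift d i) - t * \sum_(i < k) h (lshift d i).
    by rewrite mulr_sumr -sumrB; apply: eq_bigr => i _; ring.
  have e2 : \sum_(j < d) (t - s 0 (rshift k j) ^+ 2) * (1 - h (rshift k j)) =
     t * d%:R - t * \sum_(j < d) h (rshift k j) - S2 +
     \sum_(j < d) s 0 (rshift k j) ^+ 2 * h (rshift k j).
    have -> : t * d%:R = \sum_(j < d) t by rewrite sumr_const card_ord mulr_natr.
    rewrite mulr_sumr -!sumrB -big_split /=; apply: eq_bigr => i _; ring.
  move: hsum; rewrite big_split_ord /= => hsum.
  rewrite e1 e2 big_split_ord /= -hsum; ring.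
have T1 : forall i : 'I_k, 0 <= (s 0 (lshift d i) ^+ 2 - t) * h (lshift d i).
  move=> i; apply: mulr_ge0 => //; rewrite subr_ge0 /t.
  have : s 0 j0 <= s 0 (lshift d i) by apply: sdec; rewrite /= addn0 ltnW.
  have := spos j0; nra.
have T2 : forall j : 'I_d, 0 <= (t - s 0 (rshift k j) ^+ 2) * (1 - h (rshift k j)).
  move=> j; apply: mulr_ge0; last by rewrite subr_ge0.
  rewrite subr_ge0 /t.
  have : s 0 (rshift k j) <= s 0 j0 by apply: sdec; rewrite /= leq_add2l.
  have := spos (rshift k j); nra.
have P1 : 0 <= \sum_(i < k) (s 0 (lshift d i) ^+ 2 - t) * h (lshift d i) by apply: sumr_ge0 => i _; exact: T1.
have P2 : 0 <= \sum_(j < d) (t - s 0 (rshift k j) ^+ 2) * (1 - h (rshift k j)) by apply: sumr_ge0 => i _; exact: T2.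
split.
  by rewrite -subr_ge0 Hid addr_ge0.
move=> gap heq i.
have H0 : \sum_(i < k) (s 0 (lshift d i) ^+ 2 - t) * h (lshift d i) = 0.
  have : \sum_i s 0 i ^+ 2 * h i - S2 = 0 by rewrite heq subrr.
  rewrite Hid; move: P1 P2; lra.
have := @psumr_eq0P _ _ xpredT _ (fun i _ => T1 i) H0 i isT.
have kpos : (0 < k)%N by apply: leq_ltn_trans (ltn_ord i).
have hk1 : (k.-1 < k + d)%N by rewrite (leq_trans _ (leq_addr d k)) // prednK.
pose ik : 'I_(k + d) := Ordinal hk1.
have g := gap ik j0 kpos erefl (addn0 k).
have : s 0 ik <= s 0 (lshift d i).
  by apply: sdec; rewrite /= -ltnS prednK.
have := spos j0.
move=> a b /eqP; rewrite mulf_eq0 => /orP [e|/eqP h00]; last exact: h00.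
move: e; rewrite subr_eq0 => /eqP e; exfalso; move: e; rewrite /t; nra.
Qed.

Lemma sum_rsub1 (R : comPzRingType) k d (f : 'I_(k + d) -> R) :
  \sum_i f i * ((rsubmx (1%:M : 'M[R]_(k + d))) *m (rsubmx (1%:M : 'M[R]_(k + d)))^T) i i
  = \sum_(j < d) f (rshift k j).
Proof.
rewrite big_split_ord /= big1 ?add0r => [|i _].
  apply: eq_bigr => i _; rewrite mxE (bigD1 i) //= big1 ?addr0 => [|j /negbTE nij].
    by rewrite !mxE eqxx mulr1 mulr1.
  by rewrite !mxE eq_rshift eq_sym nij mulr0.
by rewrite mxE big1 ?mulr0 // => j _; rewrite !mxE eq_lrshift mul0r.
Qed.
Lemma core (R : rcfType) (p q n d k : nat)
  (A : 'M[R]_(q, n)) (B : 'M[R]_(q, d)) (C : 'M[R]_(p, n)) (D : 'M[R]_(p, d))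
  (Qt : 'M[R]_(n + d, p + (k + d)))
  (U : 'M[R]_(q, k + d)) (s : 'rV[R]_(k + d))
  (V : 'M[R]_(k + d)) :
  (0 < d)%N ->
  Qt^T *m Qt = 1%:M -> Qt *m Qt^T = 1%:M ->
  ((lsubmx Qt)^T == row_mx C D)%MS ->
  row_mx A B *m rsubmx Qt = U *m diag_mx s *m V^T ->
  U^T *m U = 1%:M ->
  V^T *m V = 1%:M -> V *m V^T = 1%:M ->
  (forall i j : 'I_(k + d), (i <= j)%N -> s 0 j <= s 0 i) ->
  (forall i : 'I_(k + d), 0 <= s 0 i) ->
  (forall i j : 'I_(k + d), (0 < k)%N ->
     nat_of_ord i = k.-1 -> nat_of_ord j = k -> s 0 j < s 0 i) ->
  let V1bar := rsubmx Qt *m lsubmx V in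
  let V2bar := rsubmx Qt *m rsubmx V in
  let V11 := usubmx V1bar in
  let V21 := dsubmx V1bar in
  let V12 := usubmx V2bar in
  let V22 := dsubmx V2bar in
  V22 \in unitmx ->
  let Xn := - (V12 *m invmx V22) in
  let Ahat := lsubmx U *m diag_mx (lsubmx s) *m V11^T in
  let Bhat := lsubmx U *m diag_mx (lsubmx s) *m V21^T in
  (forall X : 'M[R]_(n, d), tlse_solution A B C D X <-> X = Xn) /\
  (forall X : 'M[R]_(n, d), (Ahat *m X = Bhat /\ C *m X = D) <-> X = Xn).
Proof.
move=> d0 QtQ QQt hQ1 hsvd UU VV VV' sdec spos sgap V1bar V2bar V11 V21 V12 V22 uV22
  Xn Ahat Bhat.
set At := row_mx A B in hsvd *.
set Q1 := lsubmx Qt. set Q2 := rsubmx Qt in hsvd *.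
set V1 := lsubmx V. set V2 := rsubmx V.
have [hQ12 hQ2] : Q1^T *m Q2 = 0 /\ Q2^T *m Q2 = 1%:M.
  move: QtQ; rewrite -[Qt]hsubmxK tr_row_mx mul_col_row (scalar_mx_block p (k + d)).
  by case/eq_block_mx.
have hQQ : Q1 *m Q1^T + Q2 *m Q2^T = 1%:M.
  by move: QQt; rewrite -[Qt]hsubmxK tr_row_mx mul_row_col.
have [hV12 hV2] : V1^T *m V2 = 0 /\ V2^T *m V2 = 1%:M.
  move: VV; rewrite -[V]hsubmxK tr_row_mx mul_col_row (scalar_mx_block k d).
  by case/eq_block_mx.
have hVV : V1 *m V1^T + V2 *m V2^T = 1%:M.
  by move: VV'; rewrite -[V]hsubmxK tr_row_mx mul_row_col.
set U1 := lsubmx U. set U2 := rsubmx U.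
have hU1 : U1^T *m U1 = 1%:M.
  move: UU; rewrite -[U]hsubmxK tr_row_mx mul_col_row (scalar_mx_block k d).
  by case/eq_block_mx.
move/andP: hQ1 => [/submxP [K' hK'] /submxP [K hK]].
have hCDQ2 : row_mx C D *m Q2 = 0.
  by rewrite hK -mulmxA hQ12 mulmx0.
have hZ : forall X : 'M_(n, d), C *m X = D ->
    Q2 *m Q2^T *m col_mx X (-1) = col_mx X (-1).
  move=> X hX.
  have h1 : Q1^T *m col_mx X (-1) = 0.
    by rewrite hK' -mulmxA mul_row_col hX mulmxN mulmx1 subrr mulmx0.
  by rewrite -[RHS]mul1mx -hQQ mulmxDl -[Q1 *m _ *m _]mulmxA h1 mulmx0 add0r.
have hQV : Q2 *m Q2^T = V1bar *m V1bar^T + V2bar *m V2bar^T.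
  rewrite /V1bar /V2bar !trmx_mul !mulmxA -[Q2 *m V1 *m V1^T]mulmxA.
  rewrite -[Q2 *m V2 *m V2^T]mulmxA -mulmxDl -mulmxDr -/V1 -/V2 hVV mulmx1 //.
have KEY : forall X : 'M_(n, d), C *m X = D -> V1bar^T *m col_mx X (-1) = 0 -> X = Xn.
  move=> X hX h1.
  have eZ := hZ X hX.
  rewrite hQV mulmxDl -[V1bar *m _ *m _]mulmxA h1 mulmx0 add0r -mulmxA in eZ.
  move: eZ; set G := V2bar^T *m _ => eZ.
  move: eZ; rewrite -[V2bar]vsubmxK mul_col_mx -/V12 -/V22 => /eq_col_mx [eX e1].
  have eG : G = - invmx V22.
    by rewrite -[G]mul1mx -(mulVmx uV22) -mulmxA e1 mulmxN mulmx1.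
  by rewrite -eX eG mulmxN.
have eZn : col_mx Xn (-1) = V2bar *m (- invmx V22).
  by rewrite -[V2bar]vsubmxK mul_col_mx -/V12 -/V22 /Xn !mulmxN mulmxV.
have CXn : C *m Xn = D.
  have : row_mx C D *m col_mx Xn (-1) = 0.
    by rewrite eZn mulmxA /V2bar mulmxA hCDQ2 !mul0mx.
  by rewrite mul_row_col (mulmxN D) mulmx1 => /eqP; rewrite subr_eq0 => /eqP.
have V1Zn : V1bar^T *m col_mx Xn (-1) = 0.
  rewrite eZn /V1bar /V2bar trmx_mul !mulmxA -(mulmxA V1^T) hQ2 mulmx1 -/V1 -/V2.
  by rewrite hV12 !mul0mx.
have eM : forall X : 'M_(n, d), Ahat *m X - Bhat =
    U1 *m diag_mx (lsubmx s) *m (V1bar^T *m col_mx X (-1)).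
  move=> X; rewrite -[V1bar]vsubmxK -/V11 -/V21 tr_col_mx mul_row_col.
  by rewrite (mulmxN V21^T) mulmx1 mulmxDr mulmxN !mulmxA.
have spos1 : forall i : 'I_k, 0 < s 0 (lshift d i).
  move=> i.
  have kpos : (0 < k)%N by apply: leq_ltn_trans (ltn_ord i).
  have hk1 : (k.-1 < k + d)%N by rewrite (leq_trans _ (leq_addr d k)) // prednK.
  pose ik : 'I_(k + d) := Ordinal hk1.
  have j0 : (k < k + d)%N by rewrite -{1}(addn0 k) ltn_add2l.
  have g := sgap ik (Ordinal j0) kpos erefl erefl.
  have : s 0 ik <= s 0 (lshift d i) by apply: sdec; rewrite /= -ltnS prednK.
  have := spos (Ordinal j0); lra.
have Part2 : forall X : 'M_(n, d), (Ahat *m X = Bhat /\ C *m X = D) <-> X = Xn.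
  move=> X; split.
    case=> hA hX; apply: KEY => //.
    have h0 := eM X; rewrite hA subrr in h0.
    have h2 : diag_mx (lsubmx s) *m (V1bar^T *m col_mx X (-1)) = 0.
      by rewrite -[LHS]mul1mx -hU1 -mulmxA [U1 *m _]mulmxA -h0 mulmx0.
    apply/matrixP => i j; move/matrixP: h2 => /(_ i j).
    rewrite mul_diag_mx !mxE => /eqP; rewrite mulf_eq0 => /orP [/eqP e|/eqP -> //].
    by have := spos1 i; rewrite e ltxx.
  move=> ->; split => //; apply/eqP; rewrite -subr_eq0 eM V1Zn mulmx0 //.
set S2 := \sum_(j < d) s 0 (rshift k j) ^+ 2.
have S2ge0 : 0 <= S2 by apply: sumr_ge0 => j _; apply: sqr_ge0.
have hQV2 : Q2^T *m V2bar = V2 by rewrite /V2bar mulmxA hQ2 mul1mx.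
have V2V2 : V2bar^T *m V2bar = 1%:M.
  by rewrite {1}/V2bar trmx_mul -mulmxA hQV2 hV2.
set P' := V2bar *m V2bar^T.
have hQP' : Q2 *m Q2^T *m P' = P'.
  by rewrite /P' mulmxA -[Q2 *m Q2^T *m V2bar]mulmxA hQV2.
pose Et0 := - (At *m P').
have tr0 : \tr (Et0 *m Et0^T) = S2.
  rewrite /Et0 linearN /= mulmxN mulNmx opprK (@TF _ _ _ _ _ _ _ _ _ _ hsvd UU hQP').
  have -> : P'^T *m Q2 *m V = V2bar *m (V2^T *m V).
    have e : V2bar^T *m Q2 = V2^T by rewrite -[Q2 in LHS]trmxK -trmx_mul hQV2.
    by rewrite /P' trmx_mul trmxK -[V2bar *m V2bar^T *m Q2]mulmxA e mulmxA.
  rewrite trmx_mul -mulmxA [V2bar^T *m _]mulmxA V2V2 mul1mx.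
  have -> : V2^T *m V = (rsubmx (1%:M : 'M[R]_(k + d)))^T.
    by rewrite -[V2^T *m V]trmxK trmx_mul trmxK mulmx_rsub VV.
  by rewrite trmxK (@sum_rsub1 _ k d (fun i => s 0 i ^+ 2)).
have feas0 : (A + lsubmx Et0) *m Xn = B + rsubmx Et0.
  have : (At + Et0) *m col_mx Xn (-1) = 0.
    rewrite eZn /Et0 /P' mulmxDl mulNmx -[At *m (V2bar *m V2bar^T) *m _]mulmxA.
    by rewrite -[V2bar *m V2bar^T *m _]mulmxA [V2bar^T *m (V2bar *m _)]mulmxA V2V2 mul1mx subrr.
  rewrite -[Et0]hsubmxK /At add_row_mx mul_row_col (mulmxN (B + rsubmx Et0)) mulmx1.
  by rewrite row_mxKl row_mxKr => /eqP; rewrite subr_eq0 => /eqP.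
have LB : forall (E : 'M_(q, n)) (F : 'M_(q, d)) (X : 'M_(n, d)),
    (A + E) *m X = B + F -> C *m X = D ->
    S2 <= \tr (row_mx E F *m (row_mx E F)^T) /\
    (\tr (row_mx E F *m (row_mx E F)^T) = S2 -> X = Xn).
  move=> E F X hEF hX.
  set Et := row_mx E F. set Z := col_mx X (-1).
  have hEZ : Et *m Z = - (At *m Z).
    have : (At + Et) *m Z = 0.
      by rewrite /At /Et add_row_mx mul_row_col hEF (mulmxN (B + F)) mulmx1 subrr.
    by rewrite mulmxDl => /eqP; rewrite addrC addr_eq0 => /eqP.
  have ZZ : Z^T *m Z = X^T *m X + 1%:M.
    have t1 : (1 : 'M[R]_d)^T = 1 by exact: trmx1.
    have t2 : (1 : 'M[R]_d) = 1%:M by [].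
    rewrite /Z tr_col_mx mul_row_col (raddfN (@trmx R d d)) /= t1 mulNmx mulmxN opprK t2 mulmx1 //.
  have uG : Z^T *m Z \in unitmx.
    rewrite -row_free_unit; apply: inj_row_free => v hv.
    have e : \tr ((v *m X^T) *m (v *m X^T)^T) + \tr (v *m v^T) = 0.
      rewrite -mxtraceD.
      have -> : v *m X^T *m (v *m X^T)^T + v *m v^T = v *m (Z^T *m Z) *m v^T.
        by rewrite ZZ mulmxDr mulmx1 mulmxDl trmx_mul trmxK !mulmxA.
      by rewrite hv mul0mx linear0.
    move: (tr_ge0 (v *m X^T)) (tr_ge0 v) => a b; apply: tr_eq0; lra.
  set W := invmx (Z^T *m Z).
  set P := Z *m W *m Z^T.
  have GT : (Z^T *m Z)^T = Z^T *m Z by rewrite trmx_mul trmxK.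
  have PT : P^T = P by rewrite /P !trmx_mul trmxK /W trmx_inv GT mulmxA.
  have PZ : P *m Z = Z by rewrite /P -!mulmxA /W mulVmx // mulmx1.
  have ZP : Z^T *m P = Z^T by rewrite -{1}PT -trmx_mul PZ.
  have PP : P *m P = P by rewrite {1}/P -mulmxA ZP.
  have hQZ := hZ X hX.
  have QP : Q2 *m Q2^T *m P = P by rewrite /P !mulmxA hQZ.
  have trP : \tr P = d%:R.
    by rewrite /P -mulmxA mxtrace_mulC -mulmxA /W mulVmx // mxtrace1.
  have EP : Et *m P = - (At *m P) by rewrite /P !mulmxA hEZ !mulNmx.
  clearbody P.
  have QP'L : P *m Q2 *m Q2^T = P.
    have e : P^T *m (Q2 *m Q2^T)^T = P^T by rewrite -trmx_mul QP.
    by rewrite PT trmx_mul trmxK mulmxA in e.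
  have sq : forall N : 'M_(n + d), (Et *m N) *m (Et *m N)^T = Et *m (N *m N^T) *m Et^T.
    by move=> N; rewrite trmx_mul !mulmxA.
  have M1 : (1%:M - P) *m (1%:M - P)^T = 1%:M - P.
    by rewrite (raddfB (@trmx R _ _)) /= trmx1 PT mulmxBl !mulmxBr !mul1mx mulmx1 PP subrr subr0.
  have M2 : P *m P^T = P by rewrite PT PP.
  have hsplit : \tr (Et *m Et^T) = \tr ((At *m P) *m (At *m P)^T) +
      \tr ((Et *m (1%:M - P)) *m (Et *m (1%:M - P))^T).
    have -> : (At *m P) *m (At *m P)^T = (Et *m P) *m (Et *m P)^T.
      by rewrite EP linearN /= mulmxN mulNmx opprK.
    by rewrite !sq M1 M2 -mxtraceD -mulmxDl -mulmxDr addrC subrK mulmx1.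
  have TFP := @TF _ _ _ _ At Q2 U s V P hsvd UU QP.
  rewrite PT in TFP.
  set Y := P *m Q2 *m V in TFP.
  set H := Y^T *m Y in TFP.
  have YY : Y *m Y^T = P.
    rewrite /Y !trmx_mul PT !mulmxA.
    by rewrite -[P *m Q2 *m V *m V^T]mulmxA VV' mulmx1 QP'L PP.
  have PY : P *m Y = Y by rewrite /Y !mulmxA PP.
  have eY : Y = P *m Q2 *m V by [].
  clearbody Y.
  have HT : H^T = H by rewrite /H trmx_mul trmxK.
  have HH : H *m H = H.
    rewrite /H mulmxA -[Y^T *m Y *m Y^T]mulmxA YY -mulmxA.
    by rewrite PY.
  have hge0 : forall i, 0 <= H i i.
    move=> i; rewrite /H mxE; apply: sumr_ge0 => j _; rewrite mxE -expr2; exact: sqr_ge0.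
  have eH : H = Y^T *m Y by [].
  clearbody H.
  have hle1 : forall i, H i i <= 1.
    move=> i.
    have e : H i i = \sum_j H i j ^+ 2.
      rewrite -{1}HH mxE; apply: eq_bigr => j _.
      by rewrite -{2}HT mxE expr2.
    have : H i i ^+ 2 <= H i i.
      rewrite {2}e (bigD1 i) //= lerDl; apply: sumr_ge0 => j _; exact: sqr_ge0.
    have := hge0 i; nra.
  have hsum : \sum_i H i i = d%:R.
    by rewrite -trP -YY mxtrace_mulC -eH.
  have [I1 I2] := INEQ d0 sdec spos hge0 hle1 hsum.
  have G0 := tr_ge0 (Et *m (1%:M - P)).
  rewrite -/S2 in I1 I2.
  split.
    by rewrite hsplit TFP; lra.
  move=> heq.
  have heq2 : \sum_i s 0 i ^+ 2 * H i i = S2 by move: heq; rewrite hsplit TFP; lra.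
  have h0 := I2 sgap heq2.
  apply: KEY => //.
  have PV1 : P *m V1bar = 0.
    apply/matrixP => j i.
    have hY : \sum_l Y l (lshift d i) ^+ 2 = 0.
      rewrite -[RHS](h0 i) eH mxE; apply: eq_bigr => l _; by rewrite !mxE expr2.
    have := @psumr_eq0P _ _ xpredT _ (fun l _ => sqr_ge0 (Y l (lshift d i))) hY j isT.
    move/eqP; rewrite sqrf_eq0 => /eqP hYj.
    rewrite [RHS]mxE -[RHS]hYj eY /V1bar mulmxA mulmx_lsub mxE //.
  by rewrite -/Z -PZ mulmxA -PT -trmx_mul PV1 trmx0 mul0mx.
split; last exact: Part2.
move=> X; split.
  case=> hX [E [F [[_ hmin] hEF]]].
  have [lb eqc] := LB E F X hEF hX.
  have f0 : tlse_feasible A B C D (lsubmx Et0) (rsubmx Et0) by exists Xn.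
  have := hmin _ _ f0; rewrite !frobE hsubmxK tr0 ler_sqrt // => ub.
  by apply: eqc; apply/le_anti; rewrite ub lb.
move=> ->; split => //; exists (lsubmx Et0), (rsubmx Et0); split => //; split.
  by exists Xn.
move=> E' F' [X' [h1 h2]]; have [lb _] := LB E' F' X' h1 h2.
by rewrite !frobE hsubmxK tr0 ler_sqrt ?tr_ge0.
Qed.

Unset Implicit Arguments.

(* n + d - p is written (n - p) + d (equal since p <= n), k = n - p.
   Qt = [Q1 Q2] : (n+d) x (p + ((n-p)+d)), U : q x ((n-p)+d),
   Sigma = diag_mx s, V : ((n-p)+d) square. *)
Theorem theorem2p1 (R : realType) (p q n d : nat)
  (A : 'M[R]_(q, n)) (B : 'M[R]_(q, d)) (C : 'M[R]_(p, n)) (D : 'M[R]_(p, d))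
  (Qt : 'M[R]_(n + d, p + ((n - p) + d)))
  (U : 'M[R]_(q, (n - p) + d)) (s : 'rV[R]_((n - p) + d))
  (V : 'M[R]_((n - p) + d)) :
  (0 < p)%N -> (0 < q)%N -> (0 < n)%N -> (0 < d)%N ->
  (p <= n)%N -> (n + d - p <= q)%N ->
  \rank C = p ->
  Qt^T *m Qt = 1%:M -> Qt *m Qt^T = 1%:M ->
  ((lsubmx Qt)^T == row_mx C D)%MS ->
  row_mx A B *m rsubmx Qt = U *m diag_mx s *m V^T ->
  U^T *m U = 1%:M ->
  V^T *m V = 1%:M -> V *m V^T = 1%:M ->
  (forall i j : 'I_((n - p) + d), (i <= j)%N -> s 0 j <= s 0 i) ->
  (forall i : 'I_((n - p) + d), 0 <= s 0 i) ->
  (forall i j : 'I_((n - p) + d), (0 < n - p)%N ->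
     nat_of_ord i = (n - p).-1 -> nat_of_ord j = (n - p)%N -> s 0 j < s 0 i) ->
  let V1bar := rsubmx Qt *m lsubmx V in
  let V2bar := rsubmx Qt *m rsubmx V in
  let V11 := usubmx V1bar in
  let V21 := dsubmx V1bar in
  let V12 := usubmx V2bar in
  let V22 := dsubmx V2bar in
  V22 \in unitmx ->
  let Xn := - (V12 *m invmx V22) in
  let Ahat := lsubmx U *m diag_mx (lsubmx s) *m V11^T in
  let Bhat := lsubmx U *m diag_mx (lsubmx s) *m V21^T in
  (forall X : 'M[R]_(n, d), tlse_solution A B C D X <-> X = Xn) /\
  (forall X : 'M[R]_(n, d), (Ahat *m X = Bhat /\ C *m X = D) <-> X = Xn).
Proof.
move=> p0 q0 n0 d0 pn qnd rC QtQ QQt hQ1 hsvd UU VV VV' sdec spos sgap.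
exact: (@core R p q n d (n - p) A B C D Qt U s V d0 QtQ QQt hQ1 hsvd UU VV VV' sdec spos sgap).
Qed.
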